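(* Let $N=\{1,\dots,n\}$ and let $F:2^N\to\mathbb{R}$ be quasi-submodular. Run the minimization procedure (described in the context) from $X_0=\emptyset$ and let $Q_+$ be its output, and from $X_0=N$ and let $S_+$ be its output. Then every local minimum $P$ of $F$ satisfies $Q_+\subseteq P\subseteq S_+$.
   Context: For $A\subseteq N$ and $i\in N$, write $A+i=A\cup\{i\}$, $A-i=A\setminus\{i\}$, and $F(i\mid A)=F(A+i)-F(A)$. $F$ is quasi-submodular if for all $X,Y\subseteq N$ both hold: $F(X\cap Y)\ge F(X)\Rightarrow F(Y)\ge F(X\cup Y)$, and $F(X\cap Y)>F(X)\Rightarrow F(Y)>F(X\cup Y)$. A set $X\subseteq N$ is a local minimum of $F$ if $F(X-i)\ge F(X)$ for all $i\in X$ and $F(X+j)\ge F(X)$ for all $j\in N\setminus X$. Minimization procedure: given $X_0\subseteq N$, for $t=0,1,2,\dots$: let $U_t=\{u\in N\setminus X_t: F(u\mid X_t)<0\}$ and $Y_t=X_t\cup U_t$; let $D_t=\{d\in X_t: F(d\mid Y_t-d)>0\}$ and $X_{t+1}=Y_t\setminus D_t$; if $X_{t+1}=X_t$, stop and output $X_t$; otherwise continue with $t+1$. *)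

(* Defs.v *)
(* Ground set N = {1,...,n} is modelled as 'I_n. *)
From mathcomp Require Import all_boot all_order all_algebra.
Set Implicit Arguments. Unset Strict Implicit. Unset Printing Implicit Defensive.
Import Order.TTheory GRing.Theory Num.Theory.
Local Open Scope ring_scope.

Section Defs.
Variables (R : realFieldType) (n : nat).
Implicit Types (F : {set 'I_n} -> R) (A X Y : {set 'I_n}).

Definition marg F (i : 'I_n) A : R := F (i |: A) - F A.

Definition quasi_submodular F : Prop :=
  forall X Y,
    (F X <= F (X :&: Y) -> F (X :|: Y) <= F Y) /\
    (F X < F (X :&: Y) -> F (X :|: Y) < F Y).

Definition local_min F X : Prop :=
  (forall i, i \in X -> F X <= F (X :\ i)) /\
  (forall j, j \notin X -> F X <= F (j |: X)).

Definition U_set F X : {set 'I_n} := [set u | (u \notin X) && (marg F u X < 0)].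
Definition Y_set F X : {set 'I_n} := X :|: U_set F X.
Definition D_set F X : {set 'I_n} :=
  [set d | (d \in X) && (0 < marg F d (Y_set F X :\ d))].
Definition step F X : {set 'I_n} := Y_set F X :\: D_set F X.

Definition proc_output F (X0 X : {set 'I_n}) : Prop :=
  exists t : nat, X = iter t (step F) X0 /\ step F X = X.

End Defs.

(* Main.v *)
Require Import Defs.
From mathcomp Require Import all_boot all_order all_algebra.
Import Order.TTheory GRing.Theory Num.Theory.
Local Open Scope ring_scope.

Lemma low_step (R : realFieldType) (n : nat) (F : {set 'I_n} -> R) (X P : {set 'I_n}) :
  quasi_submodular F -> local_min F P -> X \subset P -> step F X \subset P.
Proof.
move=> qs [_ lmj] XP; apply/subsetP => x.
rewrite /step /Y_set /U_set !inE => /andP [_ /orP [xX|/andP [xnX hm]]].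
  exact: (subsetP XP).
apply/negPn/negP => xnP.
have E1 : (x |: X) :&: P = X.
  apply/setP => y; rewrite !inE; have [->|_] /= := eqVneq y x.
    by rewrite (negbTE xnP) (negbTE xnX).
  by case yX: (y \in X) => //=; rewrite (subsetP XP).
have E2 : (x |: X) :|: P = x |: P.
  apply/setP => y; rewrite !inE; have [->|_] //= := eqVneq y x.
  by case yX: (y \in X) => //=; rewrite (subsetP XP).
have := (qs (x |: X) P).2; rewrite E1 E2 => H.
have : F (x |: P) < F P by apply: H; rewrite /marg subr_lt0 in hm.
by rewrite ltNge lmj.
Qed.

Lemma up_step (R : realFieldType) (n : nat) (F : {set 'I_n} -> R) (X P : {set 'I_n}) :
  quasi_submodular F -> local_min F P -> P \subset X -> P \subset step F X.
Proof.
move=> qs [lmi _] PX; apply/subsetP => x xP.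
have xX := subsetP PX x xP.
rewrite /step inE; apply/andP; split; last by rewrite /Y_set inE xX.
rewrite inE xX /=; apply/negP => hm.
set Y := Y_set F X in hm.
have PY : P \subset Y by apply: subset_trans PX _; exact: subsetUl.
have xY := subsetP PY x xP.
have E1 : P :&: (Y :\ x) = P :\ x.
  apply/setP => y; rewrite !inE; have [->|_] /= := eqVneq y x; first by rewrite andbF.
  by case yP: (y \in P) => //=; by move: (subsetP PY y yP); rewrite /Y /Y_set !inE.

have E2 : P :|: (Y :\ x) = Y.
  apply/setP => y; rewrite !inE; have [->|_] /= := eqVneq y x; first by move: xY; rewrite xP /Y /Y_set !inE => ->.
  by case yP: (y \in P) => //=; by move: (subsetP PY y yP); rewrite /Y /Y_set !inE.
have := (qs P (Y :\ x)).1; rewrite E1 E2 => H.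
have := H (lmi x xP).
move: hm; rewrite /marg setD1K // subr_gt0.
by rewrite ltNge => /negP.
Qed.

Theorem lemma3 (R : realFieldType) (n : nat) (F : {set 'I_n} -> R)
  (Qp Sp : {set 'I_n}) :
  quasi_submodular F ->
  proc_output F set0 Qp ->
  proc_output F setT Sp ->
  forall P : {set 'I_n}, local_min F P -> (Qp \subset P) && (P \subset Sp).
Proof.
move=> qs [t [-> _]] [s [-> _]] P lm; apply/andP; split.
  elim: t => [|t IH] /=; first exact: sub0set.
  exact: low_step.
elim: s => [|s IH] /=; first exact: subsetT.
exact: up_step.
Qed.
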